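(* Let $S$ be a numerical semigroup with minimal generators $e<a_1<\dots<a_t$ and blowup $B$. Let $f\in\operatorname{Ap}(B;e)$, $s=f+\min{\rm ord}(f;B^{\mathcal D})e$ and $s'=f+{\rm ord}(f;B^{\mathcal D})e$. Then $s,s'\in S$, and for all integers $k\ge0$: (1) ${\rm adj}(s+ke)=f$; (2) ${\rm d}_{\max}(s'+ke;S)=d(f;B^{\mathcal D})$.
   Context: A numerical semigroup is a submonoid of $(\mathbb N,+)$ with finite complement. An $S$-factorization of $n$ is $(c_0,\dots,c_t)\in\mathbb N^{t+1}$ with $c_0e+\sum c_ia_i=n$, of length $\sum c_i$. ${\rm ord}(n;S)$ is the maximal such length, and ${\rm d}_{\max}(n;S)$ is the number of factorizations of that length. Let $d_i=a_i-e$, let $B=\langle e,d_1,\dots,d_t\rangle$ be the blowup, and $\mathcal D=(e,d_1,\dots,d_t)$. A $B^{\mathcal D}$-factorization of $b\in B$ is $(x_0,\dots,x_t)\in\mathbb N^{t+1}$ with $x_0e+\sum x_id_i=b$, of length $\sum x_i$. $\min{\rm ord}(b;B^{\mathcal D})$ and ${\rm ord}(b;B^{\mathcal D})$ are the minimal and maximal lengths of such factorizations, and $d(b;B^{\mathcal D})$ is their number. $\operatorname{Ap}(B;e)=\{w\in B:w-e\notin B\}$. The adjustment is ${\rm adj}(u)=u-{\rm ord}(u;S)e$ for $u\in S$. *)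

(* Defs.v *)
From mathcomp Require Import all_boot all_algebra.
Set Implicit Arguments. Unset Strict Implicit. Unset Printing Implicit Defensive.

(* Since all generators are >= 1, every coefficient is
   <= n, so factorizations are faithfully represented as finite functions
   'I_(size g) -> 'I_n.+1. *)
Definition factorizations (g : seq nat) (n : nat) : {set {ffun 'I_(size g) -> 'I_n.+1}} :=
  [set c : {ffun 'I_(size g) -> 'I_n.+1} | \sum_(i < size g) (c i : nat) * nth 0 g i == n].

Definition flen (g : seq nat) (n : nat) (c : {ffun 'I_(size g) -> 'I_n.+1}) : nat :=
  \sum_(i < size g) (c i : nat).

Definition inS (g : seq nat) (n : nat) : bool := factorizations g n != set0.

Definition ordg (g : seq nat) (n : nat) : nat :=
  \max_(c in factorizations g n) flen c.

(* min ord(n; g): minimal length of a factorization (the default value n of the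
   fold is never smaller than an actual length when all generators are >= 1,
   and the set of factorizations is nonempty whenever n is in the monoid). *)
Definition minordg (g : seq nat) (n : nat) : nat :=
  \big[minn/n]_(c in factorizations g n) flen c.

Definition nfact (g : seq nat) (n : nat) : nat := #|factorizations g n|.

Definition dmax (g : seq nat) (n : nat) : nat :=
  #|[set c in factorizations g n | flen c == ordg g n]|.

Definition drop_at (i : nat) (g : seq nat) : seq nat := take i g ++ drop i.+1 g.

Definition num_semigroup_mingens (g : seq nat) : Prop :=
  [/\ 0 < head 0 g,
      sorted ltn g,
      (forall i, i < size g -> ~~ inS (drop_at i g) (nth 0 g i))
    & exists N, forall n, N <= n -> inS g n].

(* Generators of the blowup with the distinguished generating list
   D = (e, d_1, ..., d_t), d_i = a_i - e. *)
Definition blowup_gens (e : nat) (a : seq nat) : seq nat := e :: map (fun x => x - e) a.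

(* Apéry set Ap(B; e) = {w in B : w - e notin B} (w - e is an integer). *)
Definition in_Apery (g : seq nat) (e w : nat) : bool :=
  inS g w && ((w < e) || ~~ inS g (w - e)).

Definition adj (g : seq nat) (e u : nat) : int := (u%:Z - (ordg g u * e)%:Z)%R.

(* Main.v *)
Require Import Defs.
From mathcomp Require Import all_boot all_algebra zify.
Set Implicit Arguments. Unset Strict Implicit.

Definition get {m n : nat} (c : {ffun 'I_m -> 'I_n.+1}) (j : nat) : nat :=
  if insub j is Some i then nat_of_ord (c i) else 0.

Lemma get_ord m n (c : {ffun 'I_m -> 'I_n.+1}) (i : 'I_m) : get c i = c i.
Proof. by rewrite /get valK. Qed.

Lemma sum_cons (z : nat) (r : seq nat) (G : nat -> nat) :
  \sum_(i < size (z :: r)) G i * nth 0 (z :: r) i =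
  G 0 * z + \sum_(i < size r) G i.+1 * nth 0 r i.
Proof.
rewrite big_ord_recl /=; congr (_ + _); apply: eq_bigr => i _; by rewrite lift0.
Qed.

Lemma len_cons (z : nat) (r : seq nat) (G : nat -> nat) :
  \sum_(i < size (z :: r)) G i = G 0 + \sum_(i < size r) G i.+1.
Proof.
rewrite big_ord_recl /=; congr (_ + _); apply: eq_bigr => i _; by rewrite lift0.
Qed.

Lemma fact_get g n (c : {ffun 'I_(size g) -> 'I_n.+1}) :
  c \in factorizations g n -> \sum_(i < size g) get c i * nth 0 g i = n.
Proof.
rewrite inE => /eqP H; apply: etrans H; apply: eq_bigr => i _; by rewrite get_ord.
Qed.

Lemma flen_get g n (c : {ffun 'I_(size g) -> 'I_n.+1}) :
  flen c = \sum_(i < size g) get c i.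
Proof. by apply: eq_bigr => i _; rewrite get_ord. Qed.

Definition mkf (g : seq nat) (n : nat) (x : nat -> nat) : {ffun 'I_(size g) -> 'I_n.+1} :=
  [ffun i : 'I_(size g) => inord (x i)].

Lemma mkfac g n (x : nat -> nat) :
  (forall i, i < size g -> 0 < nth 0 g i) ->
  \sum_(i < size g) x i * nth 0 g i = n ->
  let c := mkf g n x in
    [/\ c \in factorizations g n, flen c = \sum_(i < size g) x i &
        forall j, j < size g -> get c j = x j].
Proof.
move=> Hpos Hsum c.
have Hle : forall i : 'I_(size g), x i <= n.
  move=> i; rewrite -Hsum (bigD1 i) //=.
  apply: leq_trans (leq_addr _ _); exact: leq_pmulr (Hpos _ (ltn_ord i)).
have Hc : forall i : 'I_(size g), (c i : nat) = x i.
  by move=> i; rewrite ffunE inordK // ltnS.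
split.
- rewrite inE; apply/eqP; apply: etrans Hsum; apply: eq_bigr => i _; by rewrite Hc.
- by apply: eq_bigr => i _; rewrite Hc.
- move=> j Hj; have -> : j = Ordinal Hj by []. by rewrite get_ord Hc.
Qed.

Lemma inS_of g n (c : {ffun 'I_(size g) -> 'I_n.+1}) :
  c \in factorizations g n -> inS g n.
Proof. by move=> Hc; apply/set0Pn; exists c. Qed.

Lemma flen_le g n (c : {ffun 'I_(size g) -> 'I_n.+1}) :
  (forall i, i < size g -> 0 < nth 0 g i) ->
  c \in factorizations g n -> flen c <= n.
Proof.
move=> Hpos; rewrite inE => /eqP H; apply: leq_trans (eq_leq H); apply: leq_sum => i _.
exact: leq_pmulr (Hpos _ (ltn_ord i)).
Qed.

Lemma bigmin_le (T : eqType) (r : seq T) (P : pred T) (F : T -> nat) n c :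
  c \in r -> P c -> \big[minn/n]_(i <- r | P i) F i <= F c.
Proof.
elim: r => // x r IH; rewrite in_cons big_cons => /orP [/eqP <-|Hr] Hc.
- by rewrite Hc geq_minl.
- case: (P x); last exact: IH.
  by apply: leq_trans (geq_minr _ _) (IH Hr Hc).
Qed.

Lemma minord_attained g n :
  (forall i, i < size g -> 0 < nth 0 g i) -> inS g n ->
  exists2 c, c \in factorizations g n & flen c = minordg g n.
Proof.
move=> Hpos /set0Pn [c0 Hc0].
have Hmin : forall c, c \in factorizations g n -> minordg g n <= flen c.
  by move=> c Hc; rewrite /minordg; apply: bigmin_le => //; rewrite mem_index_enum.
have : (minordg g n = n) \/ exists2 c, c \in factorizations g n & flen c = minordg g n.
  rewrite /minordg; apply: (big_ind (fun r => r = n \/ exists2 c, c \in factorizations g n & flen c = r)).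
  - by left.
  - move=> x y Hx Hy /=; case: (leqP x y) => Hxy.
    + by [].
    + by [].
  - by move=> c Hc; right; exists c.
case=> // Heq; exists c0 => //; apply/eqP; rewrite eqn_leq Hmin // Heq.
by rewrite andbT (@flen_le _ _ c0 Hpos Hc0).
Qed.

Lemma ord_attained g n :
  inS g n -> exists2 c, c \in factorizations g n & flen c = ordg g n.
Proof.
move=> /set0Pn [c0 Hc0].
have Hp : 0 < #|factorizations g n| by apply/card_gt0P; exists c0.
case: (eq_bigmax_cond (@flen g n) Hp) => c Hc Heq.
by exists c; rewrite // /ordg Heq.
Qed.

Lemma get_inj m n (c1 c2 : {ffun 'I_m -> 'I_n.+1}) :
  (forall j, j < m -> get c1 j = get c2 j) -> c1 = c2.
Proof.
move=> H; apply/ffunP => i; apply: val_inj => /=.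
by rewrite -!get_ord H.
Qed.

Definition Dh (e : nat) (a : seq nat) (G : nat -> nat) :=
  \sum_(i < size a) G i.+1 * (nth 0 a i - e).
Definition Lz (a : seq nat) (G : nat -> nat) := \sum_(i < size a) G i.+1.

Lemma sum_h e a (G : nat -> nat) :
  \sum_(i < size (blowup_gens e a)) G i * nth 0 (blowup_gens e a) i = G 0 * e + Dh e a G.
Proof.
rewrite /blowup_gens sum_cons /Dh; congr (_ + _).
rewrite size_map; apply: eq_bigr => i _; by rewrite (nth_map 0).
Qed.

Lemma len_h e a (G : nat -> nat) :
  \sum_(i < size (blowup_gens e a)) G i = G 0 + Lz a G.
Proof. by rewrite /blowup_gens len_cons /Lz size_map. Qed.

Lemma sum_g e a (G : nat -> nat) :
  (forall i, i < size a -> e < nth 0 a i) ->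
  \sum_(i < size (e :: a)) G i * nth 0 (e :: a) i = G 0 * e + Dh e a G + Lz a G * e.
Proof.
move=> Hlt; rewrite sum_cons -addnA; congr (_ + _).
rewrite /Dh /Lz big_distrl -big_split /=; apply: eq_bigr => i _.
by rewrite -mulnDr subnK // ltnW // Hlt.
Qed.

Lemma len_g e a (G : nat -> nat) :
  \sum_(i < size (e :: a)) G i = G 0 + Lz a G.
Proof. by rewrite len_cons. Qed.

Lemma Dh_ext e a G1 G2 : (forall j, 0 < j -> G1 j = G2 j) -> Dh e a G1 = Dh e a G2.
Proof. by move=> H; apply: eq_bigr => i _; rewrite H. Qed.
Lemma Lz_ext a G1 G2 : (forall j, 0 < j -> G1 j = G2 j) -> Lz a G1 = Lz a G2.
Proof. by move=> H; apply: eq_bigr => i _; rewrite H. Qed.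

Lemma pos_h e a : 0 < e -> (forall i, i < size a -> e < nth 0 a i) ->
  forall i, i < size (blowup_gens e a) -> 0 < nth 0 (blowup_gens e a) i.
Proof.
move=> He Hlt [|i] //=; rewrite size_map => Hi.
by rewrite (nth_map 0) // subn_gt0 Hlt.
Qed.

Lemma pos_g e a : 0 < e -> (forall i, i < size a -> e < nth 0 a i) ->
  forall i, i < size (e :: a) -> 0 < nth 0 (e :: a) i.
Proof.
move=> He Hlt [|i] //= Hi; exact: ltn_trans He (Hlt _ Hi).
Qed.

Lemma AP e a f : 0 < e -> (forall i, i < size a -> e < nth 0 a i) ->
  in_Apery (blowup_gens e a) e f ->
  forall y, y \in factorizations (blowup_gens e a) f -> get y 0 = 0.
Proof.
move=> He Hlt /andP [_ Hap] y Hy.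
have := fact_get Hy; rewrite sum_h => Heq.
case E: (get y 0) => [//|x0].
pose w := fun j => if j == 0 then x0 else get y j.
have Hw : \sum_(i < size (blowup_gens e a)) w i * nth 0 (blowup_gens e a) i = f - e.
  rewrite sum_h (@Dh_ext e a w (get y)); last by case.
  rewrite /w eqxx; rewrite E mulSn in Heq; lia.
have [Hin _ _] := mkfac (pos_h He Hlt) Hw.
have Hfe : e <= f by rewrite E mulSn in Heq; lia.
move: Hap; rewrite ltnNge Hfe /= (inS_of Hin) //.
Qed.

Lemma dec_g e a n (c : {ffun 'I_(size (e :: a)) -> 'I_n.+1}) :
  (forall i, i < size a -> e < nth 0 a i) ->
  c \in factorizations (e :: a) n ->
  get c 0 * e + Dh e a (get c) + Lz a (get c) * e = n /\
  flen c = get c 0 + Lz a (get c).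
Proof.
move=> Hlt Hc; split; last by rewrite flen_get len_g.
by rewrite -sum_g // fact_get.
Qed.

Lemma dec_h e a n (c : {ffun 'I_(size (blowup_gens e a)) -> 'I_n.+1}) :
  c \in factorizations (blowup_gens e a) n ->
  get c 0 * e + Dh e a (get c) = n /\
  flen c = get c 0 + Lz a (get c).
Proof.
move=> Hc; split; last by rewrite flen_get len_h.
by rewrite -sum_h fact_get.
Qed.

Lemma UB e a f N (c : {ffun 'I_(size (e :: a)) -> 'I_(f + N * e).+1}) :
  0 < e -> (forall i, i < size a -> e < nth 0 a i) ->
  in_Apery (blowup_gens e a) e f ->
  c \in factorizations (e :: a) (f + N * e) ->
  flen c <= N /\ (flen c = N -> Dh e a (get c) = f).
Proof.
move=> He Hlt Hap Hc.
have [Hs ->] := dec_g Hlt Hc.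
move: Hs; set x0 := get c 0; set D := Dh e a (get c); set L := Lz a (get c) => Hs.
split; last first.
  by move=> HN; rewrite -HN mulnDl in Hs; lia.
case: (leqP (x0 + L) N) => // HN; exfalso.
pose w := fun j => if j == 0 then x0 + L - N else get c j.
have Hle := leq_mul (ltnW HN) (leqnn e).
have Hw : \sum_(i < size (blowup_gens e a)) w i * nth 0 (blowup_gens e a) i = f.
  rewrite sum_h (@Dh_ext e a w (get c)); last by case.
  rewrite /w eqxx -/D mulnBl mulnDl; rewrite mulnDl in Hle; lia.
have [Hin _ Hget] := mkfac (pos_h He Hlt) Hw.
have := AP He Hlt Hap Hin; rewrite Hget // /w eqxx; lia.
Qed.

Lemma CON e a f N (y : {ffun 'I_(size (blowup_gens e a)) -> 'I_f.+1}) :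
  0 < e -> (forall i, i < size a -> e < nth 0 a i) ->
  in_Apery (blowup_gens e a) e f ->
  y \in factorizations (blowup_gens e a) f -> flen y <= N ->
  let x := fun j => if j == 0 then N - flen y else get y j in
  let c := mkf (e :: a) (f + N * e) x in
  [/\ c \in factorizations (e :: a) (f + N * e), flen c = N &
      forall j, j < size (e :: a) -> get c j = x j].
Proof.
move=> He Hlt Hap Hy HN x c.
have [Hs Hl] := dec_h Hy.
have H0 := AP He Hlt Hap Hy.
rewrite H0 in Hs Hl.
have Hx : \sum_(i < size (e :: a)) x i * nth 0 (e :: a) i = f + N * e.
  rewrite sum_g // (@Dh_ext e a x (get y)); last by case.
  rewrite (@Lz_ext a x (get y)); last by case.
  rewrite /x eqxx Hl add0n mulnBl; rewrite Hl add0n in HN; have := leq_mul HN (leqnn e); rewrite mul0n add0n in Hs; lia.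
have [Hin Hlen Hget] := mkfac (pos_g He Hlt) Hx.
split => //; rewrite Hlen len_g (@Lz_ext a x (get y)); last by case.
rewrite /x eqxx; lia.
Qed.

Lemma ord_eq e a f N (y : {ffun 'I_(size (blowup_gens e a)) -> 'I_f.+1}) :
  0 < e -> (forall i, i < size a -> e < nth 0 a i) ->
  in_Apery (blowup_gens e a) e f ->
  y \in factorizations (blowup_gens e a) f -> flen y <= N ->
  ordg (e :: a) (f + N * e) = N.
Proof.
move=> He Hlt Hap Hy HN; apply/eqP; rewrite eqn_leq; apply/andP; split.
  by apply/bigmax_leqP => c Hc; case: (UB He Hlt Hap Hc).
have [Hin Hlen _] := CON He Hlt Hap Hy HN.
by rewrite -{1}Hlen; apply: leq_bigmax_cond.
Qed.

Theorem proposition3p4 (e : nat) (a : seq nat) (f : nat) :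
  num_semigroup_mingens (e :: a) ->
  in_Apery (blowup_gens e a) e f ->
  let s := f + minordg (blowup_gens e a) f * e in
  let s' := f + ordg (blowup_gens e a) f * e in
  [/\ inS (e :: a) s, inS (e :: a) s' &
      forall k : nat,
        adj (e :: a) e (s + k * e) = Posz f /\
        dmax (e :: a) (s' + k * e) = nfact (blowup_gens e a) f].
Proof.
move=> Hs Hap s s'.
case: Hs => He0 Hsort _ _.
have He : 0 < e := He0.
have Hlt : forall i, i < size a -> e < nth 0 a i.
  by apply/(all_nthP 0); exact: (order_path_min ltn_trans Hsort).
have Hf : inS (blowup_gens e a) f by case/andP: Hap.
have [ym Hym Hlm] := minord_attained (pos_h He Hlt) Hf.
have [yM HyM HlM] := ord_attained Hf.
have Hmax : forall y, y \in factorizations (blowup_gens e a) f ->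
    flen y <= ordg (blowup_gens e a) f.
  by move=> y Hy; apply: leq_bigmax_cond.
split.
- have [Hin _ _] := CON He Hlt Hap Hym (eq_leq Hlm); exact: inS_of Hin.
- have [Hin _ _] := CON He Hlt Hap HyM (eq_leq HlM); exact: inS_of Hin.
move=> k; split.
  rewrite /s -addnA -mulnDl /adj.
  rewrite (ord_eq (N := minordg (blowup_gens e a) f + k) He Hlt Hap Hym); last by rewrite Hlm leq_addr.
  by rewrite PoszD GRing.addrK.
rewrite /s' -addnA -mulnDl.
set M := ordg (blowup_gens e a) f.
set N := M + k.
have HyN : forall y, y \in factorizations (blowup_gens e a) f -> flen y <= N.
  by move=> y Hy; apply: leq_trans (Hmax y Hy) (leq_addr _ _).
rewrite /dmax (ord_eq He Hlt Hap HyM (HyN _ HyM)) /nfact.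
have Hsz : size (blowup_gens e a) = size (e :: a) by rewrite /= size_map.
pose phi := fun y : {ffun 'I_(size (blowup_gens e a)) -> 'I_f.+1} =>
  mkf (e :: a) (f + N * e) (fun j => if j == 0 then N - flen y else get y j).
pose psi := fun c : {ffun 'I_(size (e :: a)) -> 'I_(f + N * e).+1} =>
  mkf (blowup_gens e a) f (fun j => if j == 0 then 0 else get c j).
have Hpsi : forall c, c \in factorizations (e :: a) (f + N * e) -> flen c = N ->
   [/\ psi c \in factorizations (blowup_gens e a) f,
       flen (psi c) = Lz a (get c) &
       forall j, j < size (blowup_gens e a) -> get (psi c) j = if j == 0 then 0 else get c j].
  move=> c Hc HcN.
  have [_ HD] := UB He Hlt Hap Hc.
  pose w := fun j => if j == 0 then 0 else get c j.
  have Hw : \sum_(i < size (blowup_gens e a)) w i * nth 0 (blowup_gens e a) i = f.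
    rewrite sum_h (@Dh_ext e a w (get c)); last by case.
    by rewrite /w eqxx mul0n add0n HD.
  have [Hin Hlen Hget] := mkfac (pos_h He Hlt) Hw.
  split => //; rewrite Hlen len_h /w eqxx add0n.
  by apply: Lz_ext; case.
have Hset : [set c in factorizations (e :: a) (f + N * e) | flen c == N] =
            phi @: factorizations (blowup_gens e a) f.
  apply/setP => c; rewrite inE; apply/idP/imsetP.
  - case/andP => Hc /eqP HcN.
    have [Hin Hl Hg] := Hpsi c Hc HcN.
    exists (psi c) => //.
    have [_ _ Hg2] := CON He Hlt Hap Hin (HyN _ Hin).
    apply: get_inj => j Hj; rewrite Hg2 //.
    case: j Hj => [|j] Hj.
      have [_ Hl2] := dec_g Hlt Hc; rewrite eqxx Hl; lia.
    by rewrite Hg // Hsz.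
  - case=> y Hy ->.
    have [Hin Hlen _] := CON He Hlt Hap Hy (HyN _ Hy).
    by rewrite Hin Hlen eqxx.
rewrite Hset card_in_imset //.
move=> y1 y2 Hy1 Hy2 Heq; apply: get_inj => j Hj.
case: j Hj => [|j] Hj.
  by rewrite (AP He Hlt Hap Hy1) (AP He Hlt Hap Hy2).
have [_ _ G1] := CON He Hlt Hap Hy1 (HyN _ Hy1).
have [_ _ G2] := CON He Hlt Hap Hy2 (HyN _ Hy2).
have Hj' : j.+1 < size (e :: a) by rewrite -Hsz.
have E1 := G1 j.+1 Hj'; have E2 := G2 j.+1 Hj'.
transitivity (get (phi y1) j.+1); first by rewrite E1.
by rewrite Heq E2.
Qed.
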